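(* The monad $\mathbb M^\bullet_\cup=(M_\cup,\eta,\mu^\bullet)$ is an IL-monad. More precisely, let $\xi:M_\cup I\to I$ be defined by $\xi(\nu)=\max\{\nu([t,1])\cdot t: t\in(0,1]\}$. Then $(I,\xi)$ is an $\mathbb M^\bullet_\cup$-algebra, and for every compactum $X$ the family of maps $\{\xi\circ M_\cup\varphi: M_\cup X\to I \mid \varphi\in C(X,I)\}$ consists of $\mathbb M^\bullet_\cup$-algebra morphisms $(M_\cup X,\mu^\bullet X)\to(I,\xi)$ and separates the points of $M_\cup X$.
   Context: A compactum is a compact Hausdorff space; $I=[0,1]$; $C(X,I)$ is the set of continuous maps $X\to I$. An (upper-semicontinuous) capacity on a compactum $X$ is a function $\nu$ from the closed subsets of $X$ to $I$ such that: (1) $\nu(X)=1$, $\nu(\emptyset)=0$; (2) if $F\subset G$ then $\nu(F)\le\nu(G)$; (3) if $\nu(F)<a$ then there is an open set $O\supset F$ with $\nu(B)<a$ for every closed $B\subset O$. $MX$ is the set of all capacities on $X$, topologized by the subbase of sets $\{c: c(F)<a\}$ ($F$ closed, $a\in I$) and $\{c: c(U)>a\}$ ($U$ open, $a\in I$), where $c(U)=\sup\{c(K):K\text{ closed},K\subset U\}$. A possibility capacity is one with $\nu(A\cup B)=\max\{\nu(A),\nu(B)\}$ for all closed $A,B$; $M_\cup X\subset MX$ is the (closed) subspace of possibility capacities. For continuous $f:X\to Y$, $M_\cup f(c)(F)=c(f^{-1}(F))$. $\eta X(x)(F)=1$ if $x\in F$, $0$ otherwise. For closed $F\subset X$ and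 $t\in I$, $F_t=\{c\in M_\cup X: c(F)\ge t\}$, and $\mu^\bullet X:M_\cup(M_\cup X)\to M_\cup X$ is $\mu^\bullet X(\mathcal C)(F)=\max\{\mathcal C(F_t)\cdot t: t\in(0,1]\}$; $(M_\cup,\eta,\mu^\bullet)$ is a monad on the category of compacta. For a monad $\mathbb T=(T,\eta,\mu)$, a $\mathbb T$-algebra is a pair $(X,\xi)$ with $\xi:TX\to X$ continuous, $\xi\circ\eta X=\mathrm{id}_X$ and $\xi\circ\mu X=\xi\circ T\xi$; a map $f:X\to Y$ is a morphism of $\mathbb T$-algebras $(X,\xi)\to(Y,\xi')$ if $\xi'\circ Tf=f\circ\xi$. (For each $X$, $(TX,\mu X)$ is a $\mathbb T$-algebra.) A monad $\mathbb T$ on compacta is an IL-monad if there is $\xi:TI\to I$ with $(I,\xi)$ a $\mathbb T$-algebra such that for every compactum $X$ there is a point-separating family of $\mathbb T$-algebra morphisms $(TX,\mu X)\to(I,\xi)$. *)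

(* Defs.v *)
From Stdlib Require Import Reals Lra List ClassicalEpsilon.
Open Scope R_scope.

Record space := Space { pt :> Type; op : (pt -> Prop) -> Prop }.

Definition closed (X : space) (A : X -> Prop) : Prop :=
  op X (fun x => ~ A x).

Definition subset {T : Type} (A B : T -> Prop) : Prop := forall x, A x -> B x.

Definition is_topology (X : space) : Prop :=
  op X (fun _ => True) /\
  (forall U V, op X U -> op X V -> op X (fun x => U x /\ V x)) /\
  (forall Fm : (X -> Prop) -> Prop, (forall U, Fm U -> op X U) ->
      op X (fun x => exists U, Fm U /\ U x)).

Definition compact (X : space) : Prop :=
  forall Fm : (X -> Prop) -> Prop,
    (forall U, Fm U -> op X U) ->
    (forall x : X, exists U, Fm U /\ U x) ->
    exists l : list (X -> Prop), Forall Fm l /\ forall x : X, exists U, In U l /\ U x.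

Definition hausdorff (X : space) : Prop :=
  forall x y : X, x <> y ->
    exists U V, op X U /\ op X V /\ U x /\ V y /\ forall z, ~ (U z /\ V z).

Definition compactum (X : space) : Prop :=
  is_topology X /\ compact X /\ hausdorff X.

Definition cont (X Y : space) (f : X -> Y) : Prop :=
  forall V, op Y V -> op X (fun x => V (f x)).

Definition gen_op {T : Type} (S : (T -> Prop) -> Prop) (U : T -> Prop) : Prop :=
  forall x, U x -> exists l : list (T -> Prop),
    Forall S l /\ Forall (fun V => V x) l /\
    forall y, Forall (fun V => V y) l -> U y.

Definition Icar := { r : R | 0 <= r <= 1 }.

Definition I_op (U : Icar -> Prop) : Prop :=
  forall x, U x -> exists eps, 0 < eps /\
    forall y : Icar, Rabs (proj1_sig y - proj1_sig x) < eps -> U y.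

Definition I : space := Space Icar I_op.

Definition clamp (r : R) : R := Rmax 0 (Rmin 1 r).

Lemma clamp_in (r : R) : 0 <= clamp r <= 1.
Proof. unfold clamp, Rmax, Rmin; repeat destruct Rle_dec; lra. Qed.

(* Coerce a real into I (identity on [0,1]); only used where the real value is
   already in [0,1], to give maps the codomain I. *)
Definition toI (r : R) : I := exist _ (clamp r) (clamp_in r).

(** * Supremum of a set of reals (0 if it has no least upper bound) *)
Definition Rsup (E : R -> Prop) : R :=
  match excluded_middle_informative (exists l, is_lub E l) with
  | left h => proj1_sig (constructive_indefinite_description _ h)
  | right _ => 0
  end.

(* A set function nu is represented on all subsets; its values on non-closed
   sets are normalised to 0 so that capacities correspond exactly to the
   functions on closed sets of the paper. *)
Definition is_capacity (X : space) (nu : (X -> Prop) -> R) : Prop :=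
  (forall F, closed X F -> 0 <= nu F <= 1) /\
  nu (fun _ => True) = 1 /\ nu (fun _ => False) = 0 /\
  (forall F G, closed X F -> closed X G -> subset F G -> nu F <= nu G) /\
  (forall F a, closed X F -> 0 <= a <= 1 -> nu F < a ->
     exists O, op X O /\ subset F O /\
       forall B, closed X B -> subset B O -> nu B < a) /\
  (forall A, ~ closed X A -> nu A = 0).

Definition is_poss_capacity (X : space) (nu : (X -> Prop) -> R) : Prop :=
  is_capacity X nu /\
  forall A B, closed X A -> closed X B ->
    nu (fun x => A x \/ B x) = Rmax (nu A) (nu B).

Definition MUcar (X : space) := { nu : (X -> Prop) -> R | is_poss_capacity X nu }.

(* Subbase of the topology of M_cup X.  For U open,
   c(U) = sup{c(K) : K closed, K in U}, so c(U) > a iff some closed K in U has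
   c(K) > a. *)
Definition MU_subbase (X : space) (W : MUcar X -> Prop) : Prop :=
  (exists F a, closed X F /\ 0 <= a <= 1 /\
     forall c, W c <-> proj1_sig c F < a) \/
  (exists U a, op X U /\ 0 <= a <= 1 /\
     forall c, W c <-> exists K, closed X K /\ subset K U /\ proj1_sig c K > a).

Definition MU (X : space) : space := Space (MUcar X) (gen_op (MU_subbase X)).

Definition push {X Y : space} (f : X -> Y) (nu : (X -> Prop) -> R) : (Y -> Prop) -> R :=
  fun F => nu (fun x => F (f x)).

Definition eta (X : space) (x : X) : (X -> Prop) -> R :=
  fun F => if excluded_middle_informative (F x) then 1 else 0.

Definition Ft (X : space) (F : X -> Prop) (t : R) : MU X -> Prop :=
  fun c => proj1_sig c F >= t.

Definition mu_bullet (X : space) (C : (MU X -> Prop) -> R) : (X -> Prop) -> R :=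
  fun F => Rsup (fun s => exists t, 0 < t <= 1 /\ s = C (Ft X F t) * t).

Definition xi_raw (nu : (I -> Prop) -> R) : R :=
  Rsup (fun s => exists t, 0 < t <= 1 /\
          s = nu (fun r : I => t <= proj1_sig r) * t).

Definition xi_r (nu : (I -> Prop) -> R) : I := toI (xi_raw nu).

Definition xi (c : MU I) : I := xi_r (proj1_sig c).

Definition xiM (X : space) (phi : X -> I) (c : MU X) : I :=
  xi_r (push phi (proj1_sig c)).

(* Main.v *)
Require Import Defs.
From Stdlib Require Import ZArith Reals Lra Lia List ClassicalEpsilon Classical FunctionalExtensionality PropExtensionality ProofIrrelevance Arith.
Open Scope R_scope.

Lemma pext {T} (P Q : T -> Prop) : (forall x, P x <-> Q x) -> P = Q.
Proof. intros H; apply functional_extensionality; intro x; apply propositional_extensionality; auto. Qed.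

Lemma Rsup_lub (E : R -> Prop) : (exists x, E x) -> (exists M, forall x, E x -> x <= M) -> is_lub E (Rsup E).
Proof.
  intros [x Hx] [M HM]. unfold Rsup.
  destruct excluded_middle_informative as [h|h].
  - destruct (constructive_indefinite_description _ h) as [l Hl]; simpl; exact Hl.
  - exfalso; apply h. destruct (completeness E) as [l Hl].
    + exists M; intros y Hy; apply HM; auto.
    + exists x; auto.
    + exists l; auto.
Qed.

Lemma Rsup01 (E : R -> Prop) : (exists x, E x) -> (forall x, E x -> 0 <= x <= 1) -> is_lub E (Rsup E).
Proof. intros H1 H2; apply Rsup_lub; auto. exists 1; intros; apply H2; auto. Qed.

Lemma sup_ge E s x : is_lub E s -> E x -> x <= s.
Proof. intros [H _] Hx; apply H; auto. Qed.

Lemma sup_le E s M : is_lub E s -> (forall x, E x -> x <= M) -> s <= M.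
Proof. intros [_ H] HM; apply H; exact HM. Qed.

Lemma sup_approx E s r : is_lub E s -> r < s -> exists x, E x /\ r < x.
Proof.
  intros Hs Hr. apply NNPP; intro N.
  assert (s <= r). { apply (sup_le E); auto. intros x Hx. apply Rnot_lt_le; intro; apply N; eauto. }
  lra.
Qed.

Lemma clamp_id r : 0 <= r <= 1 -> clamp r = r.
Proof. unfold clamp, Rmax, Rmin; intros; repeat destruct Rle_dec; lra. Qed.

Lemma cap_range X nu A : is_capacity X nu -> 0 <= nu A <= 1.
Proof.
  intros H. destruct (classic (closed X A)) as [h|h].
  - apply (proj1 H); auto.
  - rewrite (proj2 (proj2 (proj2 (proj2 (proj2 H)))) A h); lra.
Qed.

Lemma cap_mono X nu F G : is_capacity X nu -> closed X F -> closed X G -> subset F G -> nu F <= nu G.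
Proof. intros H; apply (proj1 (proj2 (proj2 (proj2 H)))). Qed.

Lemma cP {X} (c : MU X) : is_capacity X (proj1_sig c).
Proof. exact (proj1 (proj2_sig c)). Qed.

Definition Sset (X : space) (phi : X -> I) (nu : (X -> Prop) -> R) : R -> Prop :=
  fun s => exists t, 0 < t <= 1 /\ s = nu (fun x => t <= proj1_sig (phi x)) * t.

Lemma val_lub X phi nu : is_capacity X nu -> is_lub (Sset X phi nu) (xi_raw (push phi nu)).
Proof.
  intros H. apply Rsup01.
  - exists (nu (fun x => 1 <= proj1_sig (phi x)) * 1). exists 1; split; [lra|reflexivity].
  - intros x [t [Ht ->]]. pose proof (cap_range X nu (fun x => t <= proj1_sig (phi x)) H). nra.
Qed.

Lemma val01 X phi nu : is_capacity X nu -> 0 <= xi_raw (push phi nu) <= 1.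
Proof.
  intros H. pose proof (val_lub X phi nu H) as L. split.
  - eapply Rle_trans; [|eapply sup_ge; [exact L| exists 1; split; [lra|reflexivity]]].
    pose proof (cap_range X nu (fun x => 1 <= proj1_sig (phi x)) H). nra.
  - eapply sup_le; [exact L|]. intros x [t [Ht ->]].
    pose proof (cap_range X nu (fun x => t <= proj1_sig (phi x)) H). nra.
Qed.

Lemma xiM_val X phi (c : MU X) : proj1_sig (xiM X phi c) = xi_raw (push phi (proj1_sig c)).
Proof. simpl. apply clamp_id, val01, cP. Qed.
Lemma exists_floor r : 0 <= r -> exists n : nat, INR n <= r < INR n + 1.
Proof.
  intros Hr. destruct (base_Int_part r) as [H1 H2].
  assert (0 <= Int_part r)%Z.
  { destruct (Z_lt_le_dec (Int_part r) 0) as [h|h]; auto.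
    assert (Hm : (Int_part r <= -1)%Z) by lia. apply IZR_le in Hm. lra. }
  exists (Z.to_nat (Int_part r)). rewrite INR_IZR_INZ, Z2Nat.id by auto. lra.
Qed.

Lemma exists_big r : exists n : nat, r < INR n.
Proof.
  destruct (Rle_dec 0 r) as [h|h].
  - destruct (exists_floor r h) as [n Hn]. exists (S n). rewrite S_INR; lra.
  - exists 0%nat. simpl; lra.
Qed.

Lemma op_union2 (X : space) U V : is_topology X -> op X U -> op X V -> op X (fun x => U x \/ V x).
Proof.
  intros [_ [_ H]] HU HV.
  assert (E : (fun x => U x \/ V x) = (fun x => exists W, (W = U \/ W = V) /\ W x)).
  { apply pext; intro x; split.
    - intros [h|h]; [exists U|exists V]; auto.
    - intros [W [[->| ->] h]]; auto. }
  rewrite E. apply H. intros W [->| ->]; auto.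
Qed.

Lemma op_inter2 (X : space) U V : is_topology X -> op X U -> op X V -> op X (fun x => U x /\ V x).
Proof. intros [_ [H _]]; apply H. Qed.

Lemma op_empty (X : space) (P : X -> Prop) : is_topology X -> (forall x, ~ P x) -> op X P.
Proof.
  intros [_ [_ H]] HP.
  assert (E : P = (fun x => exists W : X -> Prop, False /\ W x)).
  { apply pext; intro x; split; [intro h; exfalso; eapply HP; eauto| intros [W [[] _]]]. }
  rewrite E. apply H. intros _ [].
Qed.

Lemma op_full (X : space) (P : X -> Prop) : is_topology X -> (forall x, P x) -> op X P.
Proof.
  intros [H _] HP. assert (E : P = fun _ => True) by (apply pext; intuition).
  rewrite E; exact H.
Qed.

Lemma op_local (X : space) (P : X -> Prop) : is_topology X ->
  (forall x, P x -> exists N, op X N /\ N x /\ subset N P) -> op X P.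
Proof.
  intros [_ [_ H]] HP.
  assert (E : P = (fun x => exists N, (op X N /\ subset N P) /\ N x)).
  { apply pext; intro x; split.
    - intro h. destruct (HP x h) as [N [? [? ?]]]. exists N; auto.
    - intros [N [[_ HN] h]]; auto. }
  rewrite E. apply H. intros N [? _]; auto.
Qed.

Lemma op_ext (X : space) (P Q : X -> Prop) : (forall x, P x <-> Q x) -> op X P -> op X Q.
Proof. intros H; rewrite (pext P Q H); auto. Qed.

Lemma I_top : is_topology I.
Proof.
  split; [|split].
  - intros x _. exists 1; split; [lra|auto].
  - intros U V HU HV x [hU hV].
    destruct (HU x hU) as [e1 [He1 H1]]. destruct (HV x hV) as [e2 [He2 H2]].
    exists (Rmin e1 e2); split; [apply Rmin_pos; auto|].
    intros y Hy; split; [apply H1|apply H2];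
      eapply Rlt_le_trans; eauto; [apply Rmin_l|apply Rmin_r].
  - intros Fm HF x [U [HU hx]]. destruct (HF U HU x hx) as [e [He H]].
    exists e; split; auto. intros y Hy; exists U; auto.
Qed.

Lemma L_closed (X : space) (phi : X -> I) t : cont X I phi -> closed X (fun x => t <= proj1_sig (phi x)).
Proof.
  intros Hc. unfold closed. apply (Hc (fun r : I => ~ (t <= proj1_sig r))).
  intros r Hr. exists (t - proj1_sig r); split; [lra|].
  intros y Hy. apply Rabs_def2 in Hy. lra.
Qed.

Lemma U_open (X : space) (phi : X -> I) t : cont X I phi -> op X (fun x => t < proj1_sig (phi x)).
Proof.
  intros Hc. apply (Hc (fun r : I => t < proj1_sig r)).
  intros r Hr. exists (proj1_sig r - t); split; [lra|].
  intros y Hy. apply Rabs_def2 in Hy. lra.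
Qed.

Lemma gen_op_inter {T} (S : (T -> Prop) -> Prop) U V : gen_op S U -> gen_op S V -> gen_op S (fun x => U x /\ V x).
Proof.
  intros HU HV x [hU hV]. destruct (HU x hU) as [l1 [A1 [B1 C1]]]. destruct (HV x hV) as [l2 [A2 [B2 C2]]].
  exists (l1 ++ l2). split; [apply Forall_app; auto|split; [apply Forall_app; auto|]].
  intros y Hy. apply Forall_app in Hy. destruct Hy; split; auto.
Qed.

Lemma closed_mono_val (X : space) (phi : X -> I) (nu : (X -> Prop) -> R) t t' : cont X I phi -> is_capacity X nu -> t' <= t ->
  nu (fun x => t <= proj1_sig (phi x)) <= nu (fun x => t' <= proj1_sig (phi x)).
Proof.
  intros Hc Hn Ht. apply (cap_mono X); auto using L_closed. intros x hx; lra.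
Qed.

Notation vl phi c := (xi_raw (push phi (proj1_sig c))).

Lemma cont_lower (X : space) (phi : X -> I) (c : MU X) eps : cont X I phi -> 0 < eps ->
  exists l, Forall (MU_subbase X) l /\ Forall (fun W => W c) l /\
   forall y : MU X, Forall (fun W => W y) l -> vl phi c - eps < vl phi y.
Proof.
  intros Hc He. set (v := vl phi c).
  destruct (Rlt_le_dec (v - eps) 0) as [hv|hv].
  { exists nil; split; [constructor|split; [constructor|]].
    intros y _. pose proof (val01 X phi _ (cP y)). lra. }
  assert (Hv : v - eps/2 < v) by lra.
  destruct (sup_approx _ _ (v - eps/2) (val_lub X phi _ (cP c)) Hv) as [s [[t [Ht ->]] Hs]].
  set (p := proj1_sig c (fun x => t <= proj1_sig (phi x))) in *.
  pose proof (cap_range X _ (fun x => t <= proj1_sig (phi x)) (cP c)) as Hp. fold p in Hp.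
  assert (Htt : eps / 4 < t) by nra.
  set (t' := t - eps / 4).
  assert (Ht' : 0 < t' < t) by (unfold t'; lra).
  set (a := (v - eps) / t').
  assert (Ha0 : 0 <= a) by (unfold a; apply Rmult_le_pos; [lra|left; apply Rinv_0_lt_compat; lra]).
  assert (Hap : a < p).
  { unfold a. apply (Rmult_lt_reg_r t'); [lra|]. unfold Rdiv. rewrite Rmult_assoc, Rinv_l by lra.
    unfold t' in *. assert (p * (eps/4) <= eps/4) by nra. nra. }
  set (U := fun x => t' < proj1_sig (phi x)).
  exists ((fun y : MU X => exists K, closed X K /\ subset K U /\ proj1_sig y K > a) :: nil).
  split; [|split].
  - constructor; [|constructor]. right. exists U, a. split; [apply U_open; auto|split; [lra|]].
    intros; tauto.
  - constructor; [|constructor]. exists (fun x => t <= proj1_sig (phi x)).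
    split; [apply L_closed; auto|split; [intros x hx; unfold U; lra|]]. fold p; lra.
  - intros y Hy. apply Forall_inv in Hy. destruct Hy as [K [HK [HKU HyK]]].
    assert (H1 : proj1_sig y K <= proj1_sig y (fun x => t' <= proj1_sig (phi x))).
    { apply (cap_mono X); auto using L_closed, cP. intros x hx; apply HKU in hx; unfold U in hx; lra. }
    assert (H2 : proj1_sig y (fun x => t' <= proj1_sig (phi x)) * t' <= vl phi y).
    { eapply sup_ge; [apply val_lub, cP|]. exists t'; split; [lra|reflexivity]. }
    assert (H3 : a * t' = v - eps). { unfold a; field; lra. }
    nra.
Qed.

Lemma subbase_true (X : space) : is_topology X -> MU_subbase X (fun _ => True).
Proof.
  intros H. right. exists (fun _ => True), 0. split.
  - exact (proj1 H).
  - split; [lra|]. intros c; split; [|auto]. intros _.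
    exists (fun _ => True). split; [apply op_empty; auto|split; [intros ? ?; auto|]].
    rewrite (proj1 (proj2 (cP c))); lra.
Qed.

Lemma in_seq_floor (N i : nat) t : 0 < t <= 1 -> (0 < N)%nat -> INR i <= t * INR N -> 0 < INR i -> In i (seq 1 N).
Proof.
  intros Ht HN H1 H2. apply in_seq. split.
  - destruct i; [simpl in H2; lra|lia].
  - assert (INR i <= INR N). { assert (0 <= INR N) by apply pos_INR. nra. }
    apply INR_le in H. lia.
Qed.

Lemma cont_upper (X : space) (phi : X -> I) (c : MU X) eps : cont X I phi -> is_topology X -> 0 < eps ->
  exists l, Forall (MU_subbase X) l /\ Forall (fun W => W c) l /\
   forall y : MU X, Forall (fun W => W y) l -> vl phi y < vl phi c + eps.
Proof.
  intros Hc HT He. set (v := vl phi c).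
  pose proof (val01 X phi _ (cP c)) as Hv01. fold v in Hv01.
  destruct (Rlt_le_dec 1 (v + eps)) as [hv|hv].
  { exists nil; split; [constructor|split; [constructor|]].
    intros y _. pose proof (val01 X phi _ (cP y)). lra. }
  destruct (exists_big (16 / (eps * eps))) as [N HN].
  assert (HN0 : 0 < INR N). { eapply Rlt_trans; [|exact HN]. apply Rdiv_lt_0_compat; nra. }
  assert (HN0' : (0 < N)%nat). { destruct N; [simpl in HN0; lra| lia]. }
  set (h := / INR N).
  assert (Hh0 : 0 < h) by (apply Rinv_0_lt_compat; lra).
  assert (Hh : h <= eps * eps / 16).
  { unfold h. apply (Rmult_le_reg_r (INR N)); [lra|]. rewrite Rinv_l by lra.
    apply (Rmult_le_reg_l (16 / (eps*eps))); [apply Rdiv_lt_0_compat; nra|].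
    replace (16 / (eps * eps) * (eps * eps / 16 * INR N)) with (INR N) by (field; lra).
    rewrite Rmult_1_r; lra. }
  set (ti := fun i : nat => INR i / INR N).
  set (bi := fun i : nat => (v + eps/4) / ti i).
  set (L := fun t => fun x => t <= proj1_sig (phi x)).
  set (Wi := fun i : nat => if Rle_dec (bi i) 1 then (fun y : MU X => proj1_sig y (L (ti i)) < bi i) else (fun _ : MU X => True)).
  assert (Hti : forall i, In i (seq 1 N) -> 0 < ti i <= 1).
  { intros i Hi. apply in_seq in Hi. unfold ti. split.
    - apply Rdiv_lt_0_compat; [apply lt_0_INR; lia|lra].
    - apply (Rmult_le_reg_r (INR N)); [lra|]. unfold Rdiv; rewrite Rmult_assoc, Rinv_l, Rmult_1_r, Rmult_1_l by lra.
      apply le_INR; lia. }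
  exists (map Wi (seq 1 N)). split; [|split].
  - apply Forall_forall. intros W HW. apply in_map_iff in HW. destruct HW as [i [<- Hi]].
    unfold Wi. destruct Rle_dec as [hb|hb].
    + left. exists (L (ti i)), (bi i). split; [apply L_closed; auto|split; [|intros; tauto]].
      split; auto. unfold bi. specialize (Hti i Hi). apply Rmult_le_pos; [lra|left; apply Rinv_0_lt_compat; lra].
    + apply subbase_true; auto.
  - apply Forall_forall. intros W HW. apply in_map_iff in HW. destruct HW as [i [<- Hi]].
    unfold Wi. destruct Rle_dec as [hb|hb]; [|auto].
    specialize (Hti i Hi).
    assert (E : proj1_sig c (L (ti i)) * ti i <= v).
    { eapply sup_ge; [apply val_lub, cP|]. exists (ti i); split; [lra|reflexivity]. }
    unfold bi. apply (Rmult_lt_reg_r (ti i)); [lra|]. unfold Rdiv; rewrite Rmult_assoc, Rinv_l by lra. lra.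
  - intros y Hy. rewrite Forall_forall in Hy.
    assert (B : vl phi y <= v + eps / 2).
    { eapply sup_le; [apply val_lub, cP|]. intros s [t [Ht ->]].
      pose proof (cap_range X _ (L t) (cP y)) as Hr.
      destruct (Rle_dec t (eps / 2)) as [ht|ht].
      { change (proj1_sig y (L t) * t <= v + eps / 2). nra. }
      destruct (exists_floor (t * INR N)) as [i [Hi1 Hi2]]; [nra|].
      assert (Hh1 : INR N * h = 1) by (unfold h; field; lra).
      assert (Ht1 : t * INR N * h = t) by (rewrite Rmult_assoc, Hh1; ring).
      assert (Hti1 : ti i = INR i * h) by (unfold ti, h; field; lra).
      assert (Htle : ti i <= t) by (rewrite Hti1, <- Ht1; nra).
      assert (Htgt : t < ti i + h) by (rewrite Hti1, <- Ht1; nra).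
      assert (Heps1 : eps <= 1) by lra.
      assert (Hbig : eps / 4 < ti i) by nra.
      assert (Hi0 : 0 < INR i) by (rewrite Hti1 in Hbig; nra).
      assert (Hin : In i (seq 1 N)) by (eapply in_seq_floor; eauto; lra).
      specialize (Hy (Wi i) (in_map _ _ _ Hin)).
      assert (Hmono : proj1_sig y (L t) <= proj1_sig y (L (ti i))).
      { apply (cap_mono X); [apply cP|apply L_closed; auto|apply L_closed; auto|]. intros x hx; unfold L in *; lra. }
      assert (Hbt : bi i * (ti i + h) <= v + eps / 2).
      { unfold bi. assert (h <= eps / 4 * ti i) by nra.
        replace ((v + eps / 4) / ti i * (ti i + h)) with ((v + eps/4) + (v + eps/4) * (h / ti i)) by (field; lra).
        assert (h / ti i <= eps / 4).
        { apply (Rmult_le_reg_r (ti i)); [lra|]. unfold Rdiv; rewrite Rmult_assoc, Rinv_l by lra. lra. }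
        assert (0 <= h / ti i) by (apply Rmult_le_pos; [lra|left; apply Rinv_0_lt_compat; lra]).
        nra. }
      change (proj1_sig y (L t) * t <= v + eps / 2).
      unfold Wi in Hy. destruct Rle_dec as [hb|hb].
      + assert (0 <= bi i) by (unfold bi; apply Rmult_le_pos; [lra|left; apply Rinv_0_lt_compat; lra]). nra.
      + nra. }
    lra.
Qed.

Lemma xiM_cont (X : space) (phi : X -> I) : is_topology X -> cont X I phi -> cont (MU X) I (xiM X phi).
Proof.
  intros HT Hc V HV c Hc'. destruct (HV _ Hc') as [eps [He H]].
  destruct (cont_lower X phi c eps Hc He) as [l1 [A1 [B1 C1]]].
  destruct (cont_upper X phi c eps Hc HT He) as [l2 [A2 [B2 C2]]].
  exists (l1 ++ l2). split; [apply Forall_app; auto|split; [apply Forall_app; auto|]].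
  intros y Hy. apply Forall_app in Hy. destruct Hy as [Hy1 Hy2].
  apply H. rewrite !xiM_val. specialize (C1 y Hy1). specialize (C2 y Hy2).
  apply Rabs_def1; lra.
Qed.

Lemma Ieq (a b : I) : proj1_sig a = proj1_sig b -> a = b.
Proof. destruct a as [a Ha], b as [b Hb]; simpl; intros ->; f_equal; apply proof_irrelevance. Qed.

Lemma eta_law (x : I) : xi_r (eta I x) = x.
Proof.
  apply Ieq. unfold xi_r, toI; simpl. destruct x as [r Hr]; simpl.
  set (S := fun s => exists t, 0 < t <= 1 /\ s = eta I (exist _ r Hr) (fun q : I => t <= proj1_sig q) * t).
  assert (S1 : S (eta I (exist _ r Hr) (fun q : I => 1 <= proj1_sig q) * 1)) by (exists 1; split; [lra|reflexivity]).
  assert (S1' : 0 <= eta I (exist _ r Hr) (fun q : I => 1 <= proj1_sig q) * 1)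
    by (unfold eta; destruct excluded_middle_informative; simpl in *; lra).
  assert (HS : is_lub S r).
  { split.
    - intros s [t [Ht ->]]. unfold eta; simpl. destruct excluded_middle_informative; simpl in *; lra.
    - intros b Hb. destruct (Req_dec r 0) as [h|h].
      + subst. specialize (Hb _ S1). lra.
      + assert (E : S r). { exists r; split; [lra|]. unfold eta; destruct excluded_middle_informative as [e|e]; simpl in *; lra. }
        apply Hb; auto. }
  assert (HS' : is_lub S (Rsup S)).
  { apply Rsup01. eauto. intros s [t [Ht ->]]. unfold eta; destruct excluded_middle_informative; simpl in *; lra. }
  change (clamp (Rsup S) = r). rewrite (is_lub_u _ _ _ HS' HS). apply clamp_id; auto.
Qed.

Lemma range_lub (X : space) (phi : X -> I) nu : (forall A, 0 <= nu A <= 1) -> is_lub (Sset X phi nu) (xi_raw (push phi nu)).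
Proof.
  intros H. apply Rsup01.
  - exists (nu (fun x => 1 <= proj1_sig (phi x)) * 1). exists 1; split; [lra|reflexivity].
  - intros x [t [Ht ->]]. pose proof (H (fun x => t <= proj1_sig (phi x))). nra.
Qed.

Definition Tset (X : space) (Cn : (MU X -> Prop) -> R) (F : X -> Prop) : R -> Prop :=
  fun z => exists t, 0 < t <= 1 /\ z = Cn (Ft X F t) * t.

Lemma mb_lub (X : space) Cn F : is_capacity (MU X) Cn -> is_lub (Tset X Cn F) (mu_bullet X Cn F).
Proof.
  intros H. apply Rsup01.
  - exists (Cn (Ft X F 1) * 1). exists 1; split; [lra|reflexivity].
  - intros x [t [Ht ->]]. pose proof (cap_range _ Cn (Ft X F t) H). nra.
Qed.

Lemma mb_range (X : space) Cn F : is_capacity (MU X) Cn -> 0 <= mu_bullet X Cn F <= 1.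
Proof.
  intros H. pose proof (mb_lub X Cn F H) as L.
  pose proof (cap_range _ Cn (Ft X F 1) H).
  split.
  - eapply Rle_trans; [|eapply sup_ge; [exact L| exists 1; split; [lra|reflexivity]]]. nra.
  - eapply sup_le; [exact L|]. intros x [t [Ht ->]].
    pose proof (cap_range _ Cn (Ft X F t) H). nra.
Qed.

Lemma Ft_closed (X : space) F t : closed X F -> 0 < t -> closed (MU X) (Ft X F t).
Proof.
  intros HF Ht. unfold closed, Ft. simpl. intros c Hc.
  destruct (Rle_dec t 1) as [h|h].
  - exists ((fun y : MU X => proj1_sig y F < t) :: nil). split; [|split].
    + constructor; [|constructor]. left. exists F, t. split; auto. split; [lra|]. intros; tauto.
    + constructor; [|constructor]. lra.
    + intros y Hy. apply Forall_inv in Hy. lra.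
  - exists nil. split; [constructor|split; [constructor|]].
    intros y _. pose proof (cap_range X _ F (cP y)). lra.
Qed.

Lemma MU_closed_union (X : space) (A B : MU X -> Prop) : closed (MU X) A -> closed (MU X) B -> closed (MU X) (fun c => A c \/ B c).
Proof.
  unfold closed; simpl. intros HA HB.
  assert (E : (fun c : MUcar X => ~ (A c \/ B c)) = (fun c => ~ A c /\ ~ B c)) by (apply pext; intro; tauto).
  rewrite E. apply gen_op_inter; auto.
Qed.

Lemma MU_closed_empty (X : space) : closed (MU X) (fun _ => False).
Proof.
  unfold closed; simpl. intros c _. exists nil. split; [constructor|split; [constructor|]]. auto.
Qed.

Lemma poss_union (X : space) (Cn : (MU X -> Prop) -> R) (A : nat -> MU X -> Prop) (idx : list nat) :
  is_poss_capacity (MU X) Cn -> (forall i, In i idx -> closed (MU X) (A i)) ->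
  closed (MU X) (fun c => exists i, In i idx /\ A i c) /\
  (forall M, 0 <= M -> (forall i, In i idx -> Cn (A i) <= M) -> Cn (fun c => exists i, In i idx /\ A i c) <= M).
Proof.
  intros HC. induction idx as [|j l IH]; intros HA.
  - assert (E : (fun c => exists i, In i nil /\ A i c) = (fun _ : MU X => False)) by (apply pext; intro; simpl; firstorder).
    rewrite E. split; [apply MU_closed_empty|]. intros M HM _.
    rewrite (proj1 (proj2 (proj2 (proj1 HC)))). lra.
  - assert (E : (fun c => exists i, In i (j :: l) /\ A i c) = (fun c => A j c \/ (exists i, In i l /\ A i c))).
    { apply pext; intro c; simpl; split.
      - intros [i [[<-|hi] hc]]; [left; auto|right; eauto].
      - intros [hc|[i [hi hc]]]; eauto. }
    destruct IH as [IH1 IH2]; [intros; apply HA; simpl; auto|].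
    rewrite E. split; [apply MU_closed_union; auto; apply HA; simpl; auto|].
    intros M HM HB. rewrite (proj2 HC); auto; [|apply HA; simpl; auto].
    apply Rmax_lub; [apply HB; simpl; auto|apply IH2; auto; intros; apply HB; simpl; auto].
Qed.

Lemma B_closed (X : space) (phi : X -> I) r : is_topology X -> cont X I phi ->
  closed (MU X) (fun c => r <= proj1_sig (xiM X phi c)).
Proof.
  intros HT Hc. unfold closed. apply (xiM_cont X phi HT Hc (fun q : I => ~ (r <= proj1_sig q))).
  intros q Hq. exists (r - proj1_sig q); split; [lra|]. intros y Hy. apply Rabs_def2 in Hy. lra.
Qed.

Lemma mult_le1 (X : space) (phi : X -> I) (C : MU (MU X)) : is_topology X -> cont X I phi ->
  xi_raw (push phi (mu_bullet X (proj1_sig C))) <= xi_raw (push (xiM X phi) (proj1_sig C)).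
Proof.
  intros HT Hc. set (Cn := proj1_sig C). pose proof (cP C) as HC. fold Cn in HC.
  pose proof (val_lub (MU X) (xiM X phi) Cn HC) as LP.
  pose proof (range_lub X phi (mu_bullet X Cn) (fun A => mb_range X Cn A HC)) as LQ.
  set (P := xi_raw (push (xiM X phi) Cn)) in *.
  eapply sup_le; [exact LQ|]. intros z [s [Hs ->]].
  assert (H : mu_bullet X Cn (fun x => s <= proj1_sig (phi x)) <= P / s).
  { eapply sup_le; [apply mb_lub; auto|]. intros w [t [Ht ->]].
    assert (H1 : Cn (Ft X (fun x => s <= proj1_sig (phi x)) t) <= Cn (fun c => t * s <= proj1_sig (xiM X phi c))).
    { apply (cap_mono (MU X)); auto.
      - apply Ft_closed; [apply L_closed; auto|lra].
      - apply B_closed; auto.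
      - intros c hc. unfold Ft in hc. rewrite xiM_val.
        assert (E : proj1_sig c (fun x => s <= proj1_sig (phi x)) * s <= xi_raw (push phi (proj1_sig c))).
        { eapply sup_ge; [apply val_lub, cP|]. exists s; split; [lra|reflexivity]. }
        nra. }
    assert (H2 : Cn (fun c => t * s <= proj1_sig (xiM X phi c)) * (t * s) <= P).
    { eapply sup_ge; [exact LP|]. exists (t * s); split; [split; nra|reflexivity]. }
    apply (Rmult_le_reg_r s); [lra|]. replace (P / s * s) with P by (field; lra).
    assert (0 <= t * s) by nra.
    pose proof (Rmult_le_compat_r (t * s) _ _ H H1). rewrite Rmult_assoc. lra. }
  apply (Rmult_le_reg_r (/ s)); [apply Rinv_0_lt_compat; lra|].
  rewrite Rmult_assoc, Rinv_r by lra. rewrite Rmult_1_r. exact H.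
Qed.

Lemma mult_key (X : space) (phi : X -> I) (C : MU (MU X)) r eta : is_topology X -> cont X I phi ->
  0 < r <= 1 -> 0 < eta < r ->
  proj1_sig C (fun c => r <= proj1_sig (xiM X phi c)) * (r - eta)
   <= xi_raw (push phi (mu_bullet X (proj1_sig C))).
Proof.
  intros HT Hc Hr He. set (Cn := proj1_sig C). pose proof (cP C) as HC. fold Cn in HC.
  pose proof (range_lub X phi (mu_bullet X Cn) (fun A => mb_range X Cn A HC)) as LQ.
  set (Q := xi_raw (push phi (mu_bullet X Cn))) in *.
  set (L := fun s => fun x : X => s <= proj1_sig (phi x)).
  assert (HQ0 : 0 <= Q).
  { eapply Rle_trans; [|eapply sup_ge; [exact LQ|exists 1; split; [lra|reflexivity]]].
    pose proof (mb_range X Cn (fun x => 1 <= proj1_sig (phi x)) HC). lra. }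
  set (r' := r - eta / 2).
  destruct (exists_big (4 / eta + 2 / r')) as [N HN].
  assert (Hr' : 0 < r') by (unfold r'; lra).
  assert (Ha : 0 < 4 / eta) by (apply Rdiv_lt_0_compat; lra).
  assert (Hb : 0 < 2 / r') by (apply Rdiv_lt_0_compat; lra).
  assert (HN0 : 0 < INR N) by lra.
  set (h := / INR N).
  assert (Hh0 : 0 < h) by (apply Rinv_0_lt_compat; lra).
  assert (Hh1 : h <= eta / 4 /\ h <= r' / 2).
  { unfold h. split.
    - apply (Rmult_le_reg_r (INR N)); [lra|]. rewrite Rinv_l by lra.
      apply (Rmult_le_reg_l (4 / eta)); [lra|].
      replace (4 / eta * (eta / 4 * INR N)) with (INR N) by (field; lra). lra.
    - apply (Rmult_le_reg_r (INR N)); [lra|]. rewrite Rinv_l by lra.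
      apply (Rmult_le_reg_l (2 / r')); [lra|].
      replace (2 / r' * (r' / 2 * INR N)) with (INR N) by (field; lra). lra. }
  set (si := fun i : nat => INR i * h).
  set (ti := fun i : nat => r' / (si i + h)).
  set (A := fun i : nat => Ft X (L (si i)) (ti i)).
  set (idx := filter (fun i => if Rle_dec (r' / 2) (si i) then true else false) (seq 1 N)).
  assert (Hidx : forall i, In i idx -> r' / 2 <= si i <= 1).
  { intros i Hi. unfold idx in Hi. apply filter_In in Hi. destruct Hi as [Hi1 Hi2].
    destruct Rle_dec; [|discriminate]. split; auto. apply in_seq in Hi1.
    unfold si, h. apply (Rmult_le_reg_r (INR N)); [lra|].
    rewrite Rmult_assoc, Rinv_l by lra. rewrite Rmult_1_r, Rmult_1_l. apply le_INR; lia. }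
  assert (Hti0 : forall i, In i idx -> 0 < ti i).
  { intros i Hi. specialize (Hidx i Hi). unfold ti. apply Rdiv_lt_0_compat; lra. }
  assert (HAc : forall i, In i idx -> closed (MU X) (A i)).
  { intros i Hi. apply Ft_closed; [apply L_closed; auto|auto]. }
  destruct (poss_union X Cn A idx (proj2_sig C) HAc) as [HUc HUb].
  assert (Hcov : subset (fun c => r <= proj1_sig (xiM X phi c)) (fun c => exists i, In i idx /\ A i c)).
  { intros c Hcv. rewrite xiM_val in Hcv.
    assert (Hlt : r' < xi_raw (push phi (proj1_sig c))) by (unfold r'; lra).
    destruct (sup_approx _ _ _ (val_lub X phi _ (cP c)) Hlt) as [z [[s [Hs ->]] Hz]].
    pose proof (cap_range X _ (L s) (cP c)) as Hcr.
    change (r' < proj1_sig c (L s) * s) in Hz.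
    assert (Hsr : r' < s) by nra.
    destruct (exists_floor (s * INR N)) as [i [Hi1 Hi2]]; [nra|].
    assert (Hs1 : s * INR N * h = s) by (unfold h; field; lra).
    assert (Hsi1 : si i <= s) by (unfold si; rewrite <- Hs1; nra).
    assert (Hsi2 : s < si i + h) by (unfold si; rewrite <- Hs1; nra).
    assert (Hsi3 : r' / 2 <= si i) by lra.
    assert (Hi0 : 0 < INR i) by (unfold si in Hsi3; nra).
    assert (HN' : (0 < N)%nat) by (destruct N; [simpl in HN0; lra|lia]).
    assert (Hin : In i (seq 1 N)) by (apply (in_seq_floor N i s); auto; lra).
    exists i. split.
    - unfold idx. apply filter_In. split; auto. destruct Rle_dec; auto.
    - unfold A, Ft.
      assert (Hm : proj1_sig c (L s) <= proj1_sig c (L (si i))).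
      { apply (cap_mono X); [apply cP|apply L_closed; auto|apply L_closed; auto|]. intros x hx; unfold L in *; lra. }
      assert (ti i <= proj1_sig c (L s)).
      { unfold ti. apply (Rmult_le_reg_r (si i + h)); [lra|].
        replace (r' / (si i + h) * (si i + h)) with r' by (field; lra). nra. }
      lra. }
  set (M := Q / (r - eta)).
  assert (HM0 : 0 <= M) by (unfold M; apply Rmult_le_pos; [lra|left; apply Rinv_0_lt_compat; lra]).
  assert (HAb : forall i, In i idx -> Cn (A i) <= M).
  { intros i Hi. specialize (Hidx i Hi). specialize (Hti0 i Hi).
    pose proof (cap_range _ Cn (A i) HC) as HAr.
    unfold M. apply (Rmult_le_reg_r (r - eta)); [lra|]. replace (Q / (r - eta) * (r - eta)) with Q by (field; lra).
    destruct (Rle_dec (ti i) 1) as [ht|ht].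
    - assert (E1 : Cn (A i) * ti i <= mu_bullet X Cn (L (si i))).
      { eapply sup_ge; [apply mb_lub; auto|]. exists (ti i); split; [lra|reflexivity]. }
      assert (E2 : mu_bullet X Cn (L (si i)) * si i <= Q).
      { eapply sup_ge; [exact LQ|]. exists (si i); split; [lra|reflexivity]. }
      assert (E3 : r - eta <= ti i * si i).
      { unfold ti. replace (r' / (si i + h) * si i) with (r' - r' * h / (si i + h)) by (field; lra).
        assert (r' * h / (si i + h) <= 2 * h).
        { apply (Rmult_le_reg_r (si i + h)); [lra|].
          replace (r' * h / (si i + h) * (si i + h)) with (r' * h) by (field; lra). nra. }
        unfold r' in *; lra. }
      assert (E4 : Cn (A i) * ti i * si i <= Q).
      { eapply Rle_trans; [|exact E2]. apply Rmult_le_compat_r; lra. }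
      assert (Cn (A i) * (r - eta) <= Cn (A i) * (ti i * si i)) by (apply Rmult_le_compat_l; lra).
      rewrite <- Rmult_assoc in H. lra.
    - assert (Cn (A i) <= Cn (fun _ => False)).
      { apply (cap_mono (MU X)); auto. apply MU_closed_empty.
        intros c hc. unfold A, Ft in hc. pose proof (cap_range X _ (L (si i)) (cP c)). lra. }
      rewrite (proj1 (proj2 (proj2 HC))) in H. nra. }
  assert (HB : Cn (fun c => r <= proj1_sig (xiM X phi c)) <= M).
  { eapply Rle_trans; [|apply HUb; auto]. apply (cap_mono (MU X)); auto. apply B_closed; auto. }
  unfold M in HB. apply (Rmult_le_compat_r (r - eta)) in HB; [|lra].
  replace (Q / (r - eta) * (r - eta)) with Q in HB by (field; lra). exact HB.
Qed.

Lemma mult_law (X : space) (phi : X -> I) (C : MU (MU X)) : is_topology X -> cont X I phi ->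
  xi_r (push (xiM X phi) (proj1_sig C)) = xi_r (push phi (mu_bullet X (proj1_sig C))).
Proof.
  intros HT Hc. unfold xi_r. f_equal. apply Rle_antisym; [|apply mult_le1; auto].
  pose proof (val_lub (MU X) (xiM X phi) (proj1_sig C) (cP C)) as LP.
  eapply sup_le; [exact LP|]. intros z [r [Hr ->]].
  set (b := proj1_sig C (fun x => r <= proj1_sig (xiM X phi x))).
  set (Q := xi_raw (push phi (mu_bullet X (proj1_sig C)))).
  pose proof (cap_range _ _ (fun x => r <= proj1_sig (xiM X phi x)) (cP C)) as Hb. fold b in Hb.
  apply Rnot_lt_le. intro Hlt.
  set (eta := Rmin (r / 2) ((b * r - Q) / 2)).
  assert (He1 : eta <= r / 2) by apply Rmin_l.
  assert (He2 : eta <= (b * r - Q) / 2) by apply Rmin_r.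
  assert (He0 : 0 < eta) by (apply Rmin_pos; lra).
  assert (He3 : 0 < eta < r) by lra.
  pose proof (mult_key X phi C r eta HT Hc Hr He3) as K.
  fold b Q in K. nra.
Qed.

Lemma sep_list (X : space) (P : (X -> Prop) -> Prop) (Ns : X -> Prop) (l : list (X -> Prop)) :
  is_topology X -> P (fun _ => True) -> (forall U1 U2, P U1 -> P U2 -> P (fun x => U1 x /\ U2 x)) ->
  Forall (fun W => W = Ns \/ exists U, op X U /\ P U /\ op X W /\ (forall z, ~ (U z /\ W z))) l ->
  exists U V, op X U /\ P U /\ op X V /\ (forall z, ~ (U z /\ V z)) /\
    (forall z, (exists W, In W l /\ W z) -> Ns z \/ V z).
Proof.
  intros HT HP1 HP2. induction l as [|W l IH]; intros Hl.
  - exists (fun _ => True), (fun _ => False). split; [apply (proj1 HT)|split; [auto|split]].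
    + apply op_empty; auto.
    + split; [intros z [_ []]|]. intros z [W [[] _]].
  - pose proof (Forall_inv Hl) as H1. apply Forall_inv_tail in Hl.
    destruct (IH Hl) as [U [V [HU [HPU [HV [Hd Hc]]]]]].
    destruct H1 as [->|[U' [HU' [HPU' [HW Hd']]]]].
    + exists U, V. repeat split; auto. intros z [W' [[<-|hin] hz]]; [left; auto|apply Hc; eauto].
    + exists (fun x => U x /\ U' x), (fun x => V x \/ W x). split; [apply op_inter2; auto|split; [auto|split]].
      * apply op_union2; auto.
      * split.
        -- intros z [[h1 h2] [h3|h3]]; [apply (Hd z)|apply (Hd' z)]; auto.
        -- intros z [W' [[<-|hin] hz]]; [right; right; auto|].
           destruct (Hc z (ex_intro _ W' (conj hin hz))); auto.
Qed.

Lemma sep1 (X : space) (B : X -> Prop) x : compactum X -> closed X B -> ~ B x ->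
  exists U V, op X U /\ U x /\ op X V /\ subset B V /\ (forall z, ~ (U z /\ V z)).
Proof.
  intros [HT [Hcp Hh]] HB Hx.
  set (Fm := fun W : X -> Prop => W = (fun y => ~ B y) \/ exists U, op X U /\ U x /\ op X W /\ (forall z, ~ (U z /\ W z))).
  destruct (Hcp Fm) as [l [Hl Hcov]].
  - intros W [->|[U [_ [_ [HW _]]]]]; auto.
  - intros y. destruct (classic (B y)) as [hy|hy].
    + assert (x <> y) by (intros ->; auto).
      destruct (Hh x y H) as [U [V [HU [HV [HUx [HVy Hd]]]]]].
      exists V. split; auto. right. exists U. auto.
    + exists (fun y => ~ B y). split; auto. left; auto.
  - destruct (sep_list X (fun U => U x) (fun y => ~ B y) l HT Logic.I (fun U1 U2 h1 h2 => conj h1 h2) Hl)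
      as [U [V [HU [HUx [HV [Hd Hc]]]]]].
    exists U, V. repeat split; auto. intros z hz. destruct (Hc z (Hcov z)); tauto.
Qed.

Lemma sep2 (X : space) (A B : X -> Prop) : compactum X -> closed X A -> closed X B -> (forall z, ~ (A z /\ B z)) ->
  exists U V, op X U /\ op X V /\ subset A U /\ subset B V /\ (forall z, ~ (U z /\ V z)).
Proof.
  intros HX HA HB HAB. pose proof HX as [HT [Hcp Hh]].
  set (Fm := fun W : X -> Prop => W = (fun y => ~ A y) \/ exists V, op X V /\ subset B V /\ op X W /\ (forall z, ~ (V z /\ W z))).
  destruct (Hcp Fm) as [l [Hl Hcov]].
  - intros W [->|[U [_ [_ [HW _]]]]]; auto.
  - intros y. destruct (classic (A y)) as [hy|hy].
    + assert (~ B y) by (intro; apply (HAB y); auto).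
      destruct (sep1 X B y HX HB H) as [U [V [HU [HUy [HV [HBV Hd]]]]]].
      exists U. split; auto. right. exists V. repeat split; auto. intros z [h1 h2]; apply (Hd z); auto.
    + exists (fun y => ~ A y). split; auto. left; auto.
  - destruct (sep_list X (fun V => subset B V) (fun y => ~ A y) l HT (fun _ _ => Logic.I)
      (fun U1 U2 h1 h2 z hz => conj (h1 z hz) (h2 z hz)) Hl)
      as [U [V [HU [HUx [HV [Hd Hc]]]]]].
    exists V, U. repeat split; auto.
    + intros z hz. destruct (Hc z (Hcov z)); tauto.
    + intros z [h1 h2]; apply (Hd z); auto.
Qed.

Lemma normal (X : space) (K V : X -> Prop) : compactum X -> closed X K -> op X V -> subset K V ->
  exists V' K', op X V' /\ closed X K' /\ subset K V' /\ subset V' K' /\ subset K' V.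
Proof.
  intros HX HK HV HKV.
  assert (HcV : closed X (fun x => ~ V x)).
  { unfold closed. eapply op_ext; [|exact HV]. intro x; split; [tauto|apply NNPP]. }
  destruct (sep2 X K (fun x => ~ V x) HX HK HcV) as [P [Q [HP [HQ [HKP [HVQ Hd]]]]]].
  { intros z [h1 h2]; auto. }
  exists P, (fun x => ~ Q x). split; auto. split.
  - unfold closed. eapply op_ext; [|exact HQ]. intro x; split; [tauto|apply NNPP].
  - split; auto. split.
    + intros z hz hq. apply (Hd z); auto.
    + intros z hz. apply NNPP; intro hv. apply hz, HVQ, hv.
Qed.

Definition prec (X : space) (A B : X -> Prop) : Prop :=
  exists K V, closed X K /\ op X V /\ subset A K /\ subset K V /\ subset V B.

Lemma prec_trans (X : space) A B C : prec X A B -> prec X B C -> prec X A C.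
Proof.
  intros [K1 [V1 [? [? [? [? ?]]]]]] [K2 [V2 [? [? [? [? ?]]]]]].
  exists K1, V2. repeat split; auto. intros x hx; auto.
Qed.

Lemma prec_sub (X : space) A B : prec X A B -> subset A B.
Proof. intros [K [V [? [? [? [? ?]]]]]] x hx; auto. Qed.

Definition interp (X : space) (A B : X -> Prop) : X -> Prop :=
  epsilon (inhabits A) (fun C => prec X A C /\ prec X C B).

Lemma interp_spec (X : space) A B : compactum X -> prec X A B -> prec X A (interp X A B) /\ prec X (interp X A B) B.
Proof.
  intros HX [K [V [HK [HV [HAK [HKV HVB]]]]]]. unfold interp. apply epsilon_spec.
  destruct (normal X K V HX HK HV HKV) as [V' [K' [HV' [HK' [H1 [H2 H3]]]]]].
  exists V'. split.
  - exists K, V'. repeat split; auto. intros x hx; auto.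
  - exists K', V. repeat split; auto.
Qed.

Fixpoint G (X : space) (F0 Op : X -> Prop) (n k : nat) : X -> Prop :=
  match n with
  | O => if Nat.eqb k 0 then F0 else Op
  | S n' => if Nat.even k then G X F0 Op n' (Nat.div2 k)
            else interp X (G X F0 Op n' (Nat.div2 k)) (G X F0 Op n' (S (Nat.div2 k)))
  end.

Lemma G_S (X : space) F0 Op n k : G X F0 Op (S n) k =
  if Nat.even k then G X F0 Op n (Nat.div2 k)
  else interp X (G X F0 Op n (Nat.div2 k)) (G X F0 Op n (S (Nat.div2 k))).
Proof. reflexivity. Qed.

Lemma G_double (X : space) F0 Op n k : G X F0 Op (S n) (2 * k) = G X F0 Op n k.
Proof. rewrite G_S, Nat.even_even, Nat.div2_double. reflexivity. Qed.

Lemma G_consec (X : space) F0 Op : compactum X -> prec X F0 Op ->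
  forall n k, (k < 2 ^ n)%nat -> prec X (G X F0 Op n k) (G X F0 Op n (S k)).
Proof.
  intros HX H0. induction n as [|n IH]; intros k Hk.
  - simpl in Hk. assert (k = 0%nat) by lia. subst. simpl. exact H0.
  - destruct (Nat.Even_or_Odd k) as [[m ->]|[m ->]].
    + rewrite G_double. rewrite G_S. rewrite Nat.even_succ, Nat.odd_mul, Nat.div2_succ_double. simpl Nat.odd.
      apply interp_spec; auto. apply IH. simpl in Hk. lia.
    + replace (S (2 * m + 1)) with (2 * S m)%nat by lia. rewrite G_double.
      rewrite G_S. rewrite Nat.even_odd. rewrite Nat.add_1_r, Nat.div2_succ_double.
      apply interp_spec; auto. apply IH. simpl in Hk. lia.
Qed.

Lemma G_liftp (X : space) F0 Op p n k : G X F0 Op (n + p) (k * 2 ^ p) = G X F0 Op n k.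
Proof.
  induction p as [|p IH].
  - rewrite Nat.add_0_r, Nat.pow_0_r, Nat.mul_1_r. reflexivity.
  - rewrite Nat.add_succ_r, Nat.pow_succ_r', <- IH.
    replace (k * (2 * 2 ^ p))%nat with (2 * (k * 2 ^ p))%nat by lia. apply G_double.
Qed.

Lemma G_same (X : space) F0 Op : compactum X -> prec X F0 Op ->
  forall N k j, (k < j)%nat -> (j <= 2 ^ N)%nat -> prec X (G X F0 Op N k) (G X F0 Op N j).
Proof.
  intros HX H0 N k j. induction j as [|j IH]; intros H1 H2; [lia|].
  destruct (Nat.eq_dec k j) as [->|hne].
  - apply G_consec; auto; lia.
  - apply prec_trans with (G X F0 Op N j); [apply IH; lia|apply G_consec; auto; lia].
Qed.

Definition dv (n k : nat) : R := INR k / INR (2 ^ n).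

Lemma pow2_pos n : 0 < INR (2 ^ n).
Proof. apply lt_0_INR. apply Nat.neq_0_lt_0, Nat.pow_nonzero. lia. Qed.

Lemma dv_cross n k m j : dv n k < dv m j -> (k * 2 ^ m < j * 2 ^ n)%nat.
Proof.
  unfold dv. intros H. pose proof (pow2_pos n). pose proof (pow2_pos m).
  apply INR_lt. rewrite !mult_INR.
  apply (Rmult_lt_compat_r (INR (2 ^ n) * INR (2 ^ m))) in H; [|nra].
  replace (INR k / INR (2 ^ n) * (INR (2 ^ n) * INR (2 ^ m))) with (INR k * INR (2 ^ m)) in H by (field; lra).
  replace (INR j / INR (2 ^ m) * (INR (2 ^ n) * INR (2 ^ m))) with (INR j * INR (2 ^ n)) in H by (field; lra).
  exact H.
Qed.

Lemma dv_cross_eq n k m j : dv n k = dv m j -> (k * 2 ^ m = j * 2 ^ n)%nat.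
Proof.
  unfold dv. intros H. pose proof (pow2_pos n). pose proof (pow2_pos m).
  apply INR_eq. rewrite !mult_INR.
  assert (E : INR k / INR (2 ^ n) * (INR (2 ^ n) * INR (2 ^ m)) = INR j / INR (2 ^ m) * (INR (2 ^ n) * INR (2 ^ m))) by (rewrite H; auto).
  replace (INR k / INR (2 ^ n) * (INR (2 ^ n) * INR (2 ^ m))) with (INR k * INR (2 ^ m)) in E by (field; lra).
  replace (INR j / INR (2 ^ m) * (INR (2 ^ n) * INR (2 ^ m))) with (INR j * INR (2 ^ n)) in E by (field; lra).
  exact E.
Qed.

Lemma G_lt (X : space) F0 Op n k m j : compactum X -> prec X F0 Op ->
  (j <= 2 ^ m)%nat -> dv n k < dv m j -> prec X (G X F0 Op n k) (G X F0 Op m j).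
Proof.
  intros HX H0 Hj Hd. apply dv_cross in Hd.
  rewrite <- (G_liftp X F0 Op m n k), <- (G_liftp X F0 Op n m j), (Nat.add_comm m n).
  apply G_same; auto. rewrite Nat.pow_add_r. rewrite (Nat.mul_comm (2 ^ n)). apply Nat.mul_le_mono_r; auto.
Qed.

Lemma G_le (X : space) F0 Op n k m j : compactum X -> prec X F0 Op ->
  (j <= 2 ^ m)%nat -> dv n k <= dv m j -> subset (G X F0 Op n k) (G X F0 Op m j).
Proof.
  intros HX H0 Hj [Hd|Hd].
  - apply prec_sub, G_lt; auto.
  - apply dv_cross_eq in Hd.
    rewrite <- (G_liftp X F0 Op m n k), <- (G_liftp X F0 Op n m j), (Nat.add_comm m n), Hd.
    intros x hx; exact hx.
Qed.

Lemma dv_range n k : (k <= 2 ^ n)%nat -> 0 <= dv n k <= 1.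
Proof.
  intros H. pose proof (pow2_pos n). unfold dv. split.
  - apply Rmult_le_pos; [apply pos_INR|left; apply Rinv_0_lt_compat; lra].
  - apply (Rmult_le_reg_r (INR (2 ^ n))); [lra|]. replace (INR k / INR (2 ^ n) * INR (2 ^ n)) with (INR k) by (field; lra).
    rewrite Rmult_1_l. apply le_INR; auto.
Qed.

Lemma density a b : 0 <= a < b -> b <= 1 -> exists n k, (k <= 2 ^ n)%nat /\ a < dv n k < b.
Proof.
  intros Hab Hb1. destruct (exists_big (1 / (b - a))) as [n Hn].
  assert (Hn2 : INR n < INR (2 ^ n)) by (apply lt_INR, Nat.pow_gt_lin_r; lia).
  set (D := INR (2 ^ n)). pose proof (pow2_pos n) as HD. fold D in HD, Hn2.
  assert (HD1 : 1 < D * (b - a)).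
  { assert (1 / (b - a) < D) by lra.
    apply (Rmult_lt_compat_r (b - a)) in H; [|lra]. replace (1 / (b - a) * (b - a)) with 1 in H by (field; lra). lra. }
  destruct (exists_floor (a * D)) as [m [Hm1 Hm2]]; [nra|].
  assert (Hk : INR (S m) < b * D) by (rewrite S_INR; nra).
  exists n, (S m). split.
  - assert (INR (S m) < INR (2 ^ n)) by (fold D; nra). apply INR_lt in H. lia.
  - unfold dv; fold D. split.
    + apply (Rmult_lt_reg_r D); [lra|]. replace (INR (S m) / D * D) with (INR (S m)) by (field; lra). rewrite S_INR; lra.
    + apply (Rmult_lt_reg_r D); [lra|]. replace (INR (S m) / D * D) with (INR (S m)) by (field; lra). lra.
Qed.

Definition Eset (X : space) (F0 Op : X -> Prop) (x : X) : R -> Prop :=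
  fun s => s = 0 \/ exists n k, (k <= 2 ^ n)%nat /\ G X F0 Op n k x /\ s = 1 - dv n k.

Lemma E_lub (X : space) F0 Op x : is_lub (Eset X F0 Op x) (Rsup (Eset X F0 Op x)).
Proof.
  apply Rsup01; [exists 0; left; auto|].
  intros s [->|[n [k [Hk [_ ->]]]]]; [lra|]. pose proof (dv_range n k Hk); lra.
Qed.

Lemma E_range (X : space) F0 Op x : 0 <= Rsup (Eset X F0 Op x) <= 1.
Proof.
  pose proof (E_lub X F0 Op x) as L. split.
  - apply (sup_ge _ _ 0 L). left; auto.
  - apply (sup_le _ _ 1 L). intros s [->|[n [k [Hk [_ ->]]]]]; [lra|]. pose proof (dv_range n k Hk); lra.
Qed.

Lemma urysohn (X : space) (F0 Op : X -> Prop) : compactum X -> closed X F0 -> op X Op -> subset F0 Op ->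
  exists phi : X -> I, cont X I phi /\ (forall x, F0 x -> proj1_sig (phi x) = 1) /\
     (forall x, 0 < proj1_sig (phi x) -> Op x).
Proof.
  intros HX HF HO HFO. pose proof HX as [HT _].
  assert (H0 : prec X F0 Op) by (exists F0, Op; repeat split; auto; intros x hx; auto).
  set (g := fun x => Rsup (Eset X F0 Op x)).
  assert (Hg : forall x, proj1_sig (toI (g x)) = g x) by (intro x; simpl; apply clamp_id, E_range).
  exists (fun x => toI (g x)). split; [|split].
  -
    intros V HV. apply op_local; auto. intros x Hx. destruct (HV _ Hx) as [eps [He HVe]].
    rewrite Hg in HVe.
    pose proof (E_range X F0 Op x) as Hgx. fold (g x) in Hgx.
    assert (N1 : exists N, op X N /\ N x /\ forall y, N y -> g x - eps < g y).
    { destruct (Rlt_le_dec (g x - eps) 0) as [h|h].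
      - exists (fun _ => True). split; [apply (proj1 HT)|split; auto]. intros y _.
        pose proof (E_range X F0 Op y); fold (g y) in *; lra.
      - assert (Hlt : g x - eps < g x) by lra.
        destruct (sup_approx _ _ _ (E_lub X F0 Op x) Hlt) as [s [[->|[n [k [Hk [Hgk ->]]]]] Hs]]; [lra|].
        pose proof (dv_range n k Hk).
        destruct (density (dv n k) (1 - (g x - eps))) as [n' [k' [Hk' Hd]]]; [lra|lra|].
        destruct (G_lt X F0 Op n k n' k' HX H0 Hk' (proj1 Hd)) as [K [W [HK [HW [H1 [H2 H3]]]]]].
        exists W. split; auto. split; [auto|]. intros y hy.
        eapply Rlt_le_trans; [|apply (sup_ge _ _ _ (E_lub X F0 Op y))].
        2: { right. exists n', k'. split; [auto|split; [apply H3; auto|reflexivity]]. }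
        lra. }
    assert (N2 : exists N, op X N /\ N x /\ forall y, N y -> g y < g x + eps).
    { destruct (Rlt_le_dec 1 (g x + eps)) as [h|h].
      - exists (fun _ => True). split; [apply (proj1 HT)|split; auto]. intros y _.
        pose proof (E_range X F0 Op y); fold (g y) in *; lra.
      - destruct (density (1 - g x - eps / 2) (1 - g x)) as [n1 [k1 [Hk1 Hd1]]]; [lra|lra|].
        pose proof (dv_range n1 k1 Hk1).
        destruct (density (dv n1 k1) (1 - g x)) as [n2 [k2 [Hk2 Hd2]]]; [lra|lra|].
        destruct (G_lt X F0 Op n1 k1 n2 k2 HX H0 Hk2 (proj1 Hd2)) as [K [W [HK [HW [H1 [H2 H3]]]]]].
        exists (fun z => ~ K z). split; [exact HK|split].
        + intro hK. assert (hG : G X F0 Op n2 k2 x) by (apply H3, H2, hK).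
          assert (1 - dv n2 k2 <= g x).
          { apply (sup_ge _ _ _ (E_lub X F0 Op x)). right. exists n2, k2. auto. }
          lra.
        + intros y hy. assert (g y <= g x + eps / 2); [|lra].
          apply (sup_le _ _ _ (E_lub X F0 Op y)). intros s [->|[n [k [Hk [Hgk ->]]]]]; [lra|].
          destruct (Rle_dec (dv n k) (dv n1 k1)) as [hd|hd].
          * exfalso. apply hy, H1. apply (G_le X F0 Op n k n1 k1 HX H0 Hk1 hd). auto.
          * lra. }
    destruct N1 as [N1 [HN1 [HxN1 HN1']]]. destruct N2 as [N2 [HN2 [HxN2 HN2']]].
    exists (fun y => N1 y /\ N2 y). split; [apply op_inter2; auto|split; [auto|]].
    intros y [h1 h2]. apply HVe. rewrite Hg. apply Rabs_def1; [specialize (HN2' y h2)|specialize (HN1' y h1)]; lra.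
  - intros x hx. rewrite Hg. apply Rle_antisym; [apply E_range|].
    apply (sup_ge _ _ _ (E_lub X F0 Op x)). right. exists 0%nat, 0%nat. split; [simpl; lia|split].
    + simpl. exact hx.
    + unfold dv. simpl. lra.
  - intros x hx. rewrite Hg in hx.
    destruct (sup_approx _ _ 0 (E_lub X F0 Op x) hx) as [s [[->|[n [k [Hk [Hgk ->]]]]] Hs]]; [lra|].
    assert (Hd1 : dv 0 1 = 1) by (unfold dv; simpl; field).
    assert (Hd : dv n k < dv 0 1) by lra.
    assert (Hle : (1 <= 2 ^ 0)%nat) by (simpl; lia).
    pose proof (G_lt X F0 Op n k 0 1 HX H0 Hle Hd) as Hp. apply prec_sub in Hp.
    apply Hp in Hgk. exact Hgk.
Qed.

Lemma sepdir (X : space) (c c' : MU X) A : compactum X -> closed X A -> proj1_sig c A < proj1_sig c' A ->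
  exists phi : X -> I, cont X I phi /\ proj1_sig (xiM X phi c) < proj1_sig (xiM X phi c').
Proof.
  intros HX HA Hlt. set (a := (proj1_sig c A + proj1_sig c' A) / 2).
  pose proof (cap_range X _ A (cP c)). pose proof (cap_range X _ A (cP c')).
  destruct (proj1 (proj2 (proj2 (proj2 (proj2 (cP c))))) A a HA ltac:(unfold a; lra) ltac:(unfold a; lra))
    as [O [HO [HAO HB]]].
  destruct (urysohn X A O HX HA HO HAO) as [phi [Hc [H1 H2]]].
  exists phi. split; auto. rewrite !xiM_val.
  assert (E1 : xi_raw (push phi (proj1_sig c)) <= a).
  { eapply sup_le; [apply val_lub, cP|]. intros s [t [Ht ->]].
    assert (proj1_sig c (fun x => t <= proj1_sig (phi x)) < a).
    { apply HB; [apply L_closed; auto|]. intros x hx. apply H2. lra. }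
    pose proof (cap_range X _ (fun x => t <= proj1_sig (phi x)) (cP c)). nra. }
  assert (E2 : proj1_sig c' (fun x => 1 <= proj1_sig (phi x)) * 1 <= xi_raw (push phi (proj1_sig c'))).
  { eapply sup_ge; [apply val_lub, cP|]. exists 1; split; [lra|reflexivity]. }
  assert (E3 : proj1_sig c' A <= proj1_sig c' (fun x => 1 <= proj1_sig (phi x))).
  { apply (cap_mono X); [apply cP|auto|apply L_closed; auto|]. intros x hx. rewrite H1; auto; lra. }
  unfold a in *. lra.
Qed.

Lemma separate (X : space) (c c' : MU X) : compactum X -> c <> c' ->
  exists phi : X -> I, cont X I phi /\ xiM X phi c <> xiM X phi c'.
Proof.
  intros HX Hne.
  assert (HA : exists A, proj1_sig c A <> proj1_sig c' A).
  { apply NNPP; intro N. apply Hne. destruct c as [f Hf], c' as [f' Hf']. simpl in N.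
    assert (f = f').
    { apply functional_extensionality. intro A. apply NNPP; intro h; apply N; eauto. }
    subst. f_equal. apply proof_irrelevance. }
  destruct HA as [A HA].
  assert (HAc : closed X A).
  { apply NNPP; intro h. apply HA.
    rewrite (proj2 (proj2 (proj2 (proj2 (proj2 (cP c))))) A h).
    rewrite (proj2 (proj2 (proj2 (proj2 (proj2 (cP c'))))) A h). reflexivity. }
  destruct (Rlt_or_le (proj1_sig c A) (proj1_sig c' A)) as [h|h].
  - destruct (sepdir X c c' A HX HAc h) as [phi [Hc Hl]]. exists phi; split; auto.
    intro E; rewrite E in Hl; lra.
  - assert (h' : proj1_sig c' A < proj1_sig c A) by lra.
    destruct (sepdir X c' c A HX HAc h') as [phi [Hc Hl]]. exists phi; split; auto.
    intro E; rewrite E in Hl; lra.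
Qed.

Lemma compactum_top (X : space) : compactum X -> is_topology X.
Proof. intros [H _]; exact H. Qed.

Lemma cont_id : cont I I (fun x => x).
Proof. intros V HV; exact HV. Qed.

Theorem theorem2 :
  (* (I, xi) is an M^bullet_cup-algebra *)
  (cont (MU I) I xi /\
   (forall x : I, xi_r (eta I x) = x) /\
   (forall C : MU (MU I),
      xi_r (mu_bullet I (proj1_sig C)) = xi_r (push xi (proj1_sig C)))) /\
  (* for every compactum X, the maps xi o M_cup phi (phi in C(X,I)) are
     algebra morphisms (M_cup X, mu^bullet X) -> (I, xi) separating points *)
  (forall X : space, compactum X ->
     (forall phi : X -> I, cont X I phi ->
        cont (MU X) I (xiM X phi) /\
        forall C : MU (MU X),
          xi_r (push (xiM X phi) (proj1_sig C)) =
          xi_r (push phi (mu_bullet X (proj1_sig C)))) /\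
     (forall c c' : MU X, c <> c' ->
        exists phi : X -> I, cont X I phi /\ xiM X phi c <> xiM X phi c')).
Proof.
  split; [split; [|split]|].
  - exact (xiM_cont I (fun x => x) I_top cont_id).
  - exact eta_law.
  - intros C. symmetry. exact (mult_law I (fun x => x) C I_top cont_id).
  - intros X HX. split.
    + intros phi Hc. split; [apply xiM_cont; auto; apply compactum_top; auto|].
      intros C. apply mult_law; auto. apply compactum_top; auto.
    + intros c c' Hne. apply separate; auto.
Qed.
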